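(* Let $\Gamma$ be a gain operator on $\ell^\infty_+(\mathcal I)$ satisfying the $\oplus$-MBI property, and for $b\in\ell^\infty_+(\mathcal I)$ let $\Gamma^\oplus_b(s):=b\oplus\Gamma(s)$. Then for each $b\in\ell^\infty_+(\mathcal I)$ there exist fixed points $s_*(b)$ and $s^*(b)$ of $\Gamma^\oplus_b$ such that: (a) every $s\in\mathrm{Fix}(\Gamma^\oplus_b)$ satisfies $s_*(b)\le s\le s^*(b)$; (b) if $b^1\le b^2$ then $s_*(b^1)\le s_*(b^2)$ and $s^*(b^1)\le s^*(b^2)$; (c) for every $s\le s_*(b)$, $(\Gamma^\oplus_b)^n(s)\to s_*(b)$ weak$^*$; (d) for every $s\ge s^*(b)$, $(\Gamma^\oplus_b)^n(s)\to s^*(b)$ weak$^*$.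
   Context: Let $\mathcal I$ be a nonempty countable index set; $\ell^\infty_+(\mathcal I)$ is the cone of nonnegative real families $s=(s_i)_{i\in\mathcal I}$ with $\|s\|:=\sup_i|s_i|<\infty$, ordered componentwise; $\oplus$ is the componentwise maximum. A sequence in $\ell^\infty(\mathcal I)$ converges weak$^*$ (viewing $\ell^\infty=(\ell^1)^*$) iff it is norm-bounded and converges componentwise. $\mathcal K_\infty$: continuous strictly increasing unbounded $\gamma:\mathbb R_+\to\mathbb R_+$ with $\gamma(0)=0$. For $\mathcal J\subset\mathcal I$, $s_{|\mathcal J}$ agrees with $s$ on $\mathcal J$ and is $0$ elsewhere. Gain operator: for each $i$ a finite (possibly empty) $\mathcal I_i\subset\mathcal I\setminus\{i\}$; directed graph $\mathcal G$ with vertices $\mathcal I$ and edges $ji$, $j\in\mathcal I_i$; a pointwise equicontinuous family $\gamma_{ij}\in\mathcal K_\infty$ ($ji\in E(\mathcal G)$); functions $\mu_i:\ell^\infty_+(\mathcal I)\to[0,\infty]$ with (M1) some $\xi\in\mathcal K_\infty$ has $\mu_i(0)=0$, $\mu_i(s)\ge\xi(\|s\|)$; (M2) $\mu_i$ monotone; (M3) for each finite $\mathcal J$, $\mu_i$ restricted to vectors vanishing off $\mathcal J$ is finite-valued and continuous; (M4) for each norm-bounded $A$ and $\varepsilon>0$ there is $\delta>0$ with $\sup_i|\mu_i(s_{|\mathcal I_i})-\mu_i(s^0_{|\mathcal I_i})|\le\varepsilon$ whenever $s^0\in A$, $\|s-s^0\|\le\delta$. $\Gamma_i(s):=\mu_i([\gamma_{ij}(s_j)]_{j\in\mathcal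 I_i})$ (argument zero outside $\mathcal I_i$). $\oplus$-MBI property: there is $\varphi\in\mathcal K_\infty$ such that for all $s,b\in\ell^\infty_+(\mathcal I)$, $s\le b\oplus\Gamma(s)$ implies $\|s\|\le\varphi(\|b\|)$. $\mathrm{Fix}(T)$ denotes the fixed point set of $T$. *)

(* Defs.v *)
From Stdlib Require Import Reals List.
From Coquelicot Require Import Coquelicot.
Open Scope R_scope.

Section Defs.
Context {I : Type}.

(** Families s : I -> R; ℓ^∞_+(I) = nonnegative bounded families. *)
Definition bounded (s : I -> R) : Prop := exists M, forall i, Rabs (s i) <= M.
Definition lpos (s : I -> R) : Prop := (forall i, 0 <= s i) /\ bounded s.

(** sup-norm ‖s‖ = sup_i |s_i| (meaningful for bounded s, I nonempty). *)
Definition linf_norm (s : I -> R) : R :=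
  real (Lub_Rbar (fun x => exists i, x = Rabs (s i))).

Definition fle (s t : I -> R) : Prop := forall i, s i <= t i.
Definition oplus (s t : I -> R) : I -> R := fun i => Rmax (s i) (t i).

Definition restr (Idec : forall x y : I, {x = y} + {x <> y})
  (J : list I) (s : I -> R) : I -> R :=
  fun j => if in_dec Idec j J then s j else 0.

Definition vanish_off (J : list I) (s : I -> R) : Prop :=
  forall j, ~ In j J -> s j = 0.

(** weak* convergence of a sequence in ℓ^∞(I): norm-bounded and componentwise *)
Definition wstar_cv (x : nat -> I -> R) (l : I -> R) : Prop :=
  (exists M, forall n i, Rabs (x n i) <= M) /\
  (forall i, is_lim_seq (fun n => x n i) (l i)).

End Defs.

(** class K_∞ of functions R_+ -> R_+ (represented as R -> R, only values
    on R_+ matter) *)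
Definition Kinf (g : R -> R) : Prop :=
  g 0 = 0 /\
  (forall x, 0 <= x -> 0 <= g x) /\
  (forall x, 0 <= x -> forall eps, 0 < eps -> exists d, 0 < d /\
      forall y, 0 <= y -> Rabs (y - x) < d -> Rabs (g y - g x) < eps) /\
  (forall x y, 0 <= x -> x < y -> g x < g y) /\
  (forall M, exists x, 0 <= x /\ M < g x).

Definition Gamma {I : Type} (Idec : forall x y : I, {x = y} + {x <> y})
  (Ii : I -> list I) (gam : I -> I -> R -> R) (mu : I -> (I -> R) -> Rbar)
  (s : I -> R) : I -> R :=
  fun i => real (mu i (restr Idec (Ii i) (fun j => gam i j (s j)))).

Definition gain_operator {I : Type} (Idec : forall x y : I, {x = y} + {x <> y})
  (Ii : I -> list I) (gam : I -> I -> R -> R) (mu : I -> (I -> R) -> Rbar)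
  : Prop :=
  (forall i, ~ In i (Ii i)) /\
  (forall i j, In j (Ii i) -> Kinf (gam i j)) /\
  (forall r, 0 <= r -> forall eps, 0 < eps -> exists d, 0 < d /\
     forall i j, In j (Ii i) -> forall r', 0 <= r' -> Rabs (r' - r) < d ->
       Rabs (gam i j r' - gam i j r) < eps) /\
  (forall i, exists xi, Kinf xi /\ mu i (fun _ => 0) = Finite 0 /\
     forall s, lpos s -> Rbar_le (Finite (xi (linf_norm s))) (mu i s)) /\
  (forall i s t, lpos s -> lpos t -> fle s t -> Rbar_le (mu i s) (mu i t)) /\
  (forall i (J : list I),
     (forall s, lpos s -> vanish_off J s -> is_finite (mu i s)) /\
     (forall s, lpos s -> vanish_off J s -> forall eps, 0 < eps ->
        exists d, 0 < d /\ forall t, lpos t -> vanish_off J t ->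
          linf_norm (fun j => t j - s j) < d ->
          Rabs (real (mu i t) - real (mu i s)) < eps)) /\
  (forall A : (I -> R) -> Prop,
     (forall s, A s -> lpos s) ->
     (exists M, forall s, A s -> linf_norm s <= M) ->
     forall eps, 0 < eps -> exists d, 0 < d /\
       forall s0 s, A s0 -> lpos s -> linf_norm (fun j => s j - s0 j) <= d ->
         forall i, Rabs (real (mu i (restr Idec (Ii i) s))
                         - real (mu i (restr Idec (Ii i) s0))) <= eps).

Definition oplus_MBI {I : Type} (G : (I -> R) -> (I -> R)) : Prop :=
  exists phi, Kinf phi /\
    forall s b, lpos s -> lpos b -> fle s (oplus b (G s)) ->
      linf_norm s <= phi (linf_norm b).

(* Main.v *)
Require Import Defs.
From Stdlib Require Import Reals List Lra FunctionalExtensionality Classical Lia.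
From Coquelicot Require Import Coquelicot.
Open Scope R_scope.

Lemma lub_props (P : R -> Prop) x0 B : P x0 -> (forall x, P x -> x <= B) ->
  (forall x, P x -> x <= real (Lub_Rbar P)) /\
  (forall c, (forall x, P x -> x <= c) -> real (Lub_Rbar P) <= c).
Proof.
  intros H0 HB.
  destruct (Lub_Rbar_correct P) as [Hub Hlub].
  revert Hub Hlub. case (Lub_Rbar P).
  - intros l Hub Hlub. split.
    + intros x Hx. exact (Hub x Hx).
    + intros c Hc. exact (Hlub (Finite c) Hc).
  - intros Hub Hlub. exfalso. exact (Hlub (Finite B) HB).
  - intros Hub Hlub. exfalso. exact (Hub x0 H0).
Qed.

Lemma norm_ge {I} (s : I -> R) : Defs.bounded s -> forall i, Rabs (s i) <= linf_norm s.
Proof.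
  intros [M HM] i. unfold linf_norm.
  destruct (lub_props (fun x => exists i, x = Rabs (s i)) (Rabs (s i)) M) as [H1 _].
  - exists i; reflexivity.
  - intros x [j ->]; apply HM.
  - apply H1. exists i; reflexivity.
Qed.

Lemma norm_le {I} (ne : inhabited I) (s : I -> R) M :
  (forall i, Rabs (s i) <= M) -> linf_norm s <= M.
Proof.
  intros HM. destruct ne as [i0]. unfold linf_norm.
  destruct (lub_props (fun x => exists i, x = Rabs (s i)) (Rabs (s i0)) M) as [_ H2].
  - exists i0; reflexivity.
  - intros x [j ->]; apply HM.
  - apply H2. intros x [j ->]; apply HM.
Qed.

Lemma norm_nonneg {I} (ne : inhabited I) (s : I -> R) : Defs.bounded s -> 0 <= linf_norm s.
Proof.
  intros Hb. destruct ne as [i0]. eapply Rle_trans; [apply Rabs_pos|]. apply (norm_ge s Hb i0).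
Qed.

Lemma lim_real (u : nat -> R) (l : R) : is_lim_seq u l -> real (Lim_seq u) = l.
Proof. intros H. rewrite (is_lim_seq_unique u l H). reflexivity. Qed.

Lemma lim_uniq (u : nat -> R) (a b : R) : is_lim_seq u a -> is_lim_seq u b -> a = b.
Proof.
  intros Ha Hb. rewrite <- (lim_real u a Ha), <- (lim_real u b Hb). reflexivity.
Qed.

Lemma incr_cv (u : nat -> R) B : (forall n, u n <= u (S n)) -> (forall n, u n <= B) ->
  is_lim_seq u (real (Lim_seq u)).
Proof.
  intros Hi HB.
  destruct (growing_cv u) as [l Hl].
  - intro n; apply Hi.
  - exists B. intros x [n ->]. apply HB.
  - apply is_lim_seq_Reals in Hl. rewrite (lim_real u l Hl). exact Hl.
Qed.

Lemma decr_cv (u : nat -> R) B : (forall n, u (S n) <= u n) -> (forall n, B <= u n) ->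
  is_lim_seq u (real (Lim_seq u)).
Proof.
  intros Hi HB.
  destruct (decreasing_cv u) as [l Hl].
  - intro n; apply Hi.
  - exists (- B). intros x [n ->]. unfold opp_seq. specialize (HB n). lra.
  - apply is_lim_seq_Reals in Hl. rewrite (lim_real u l Hl). exact Hl.
Qed.

Lemma lim_le_const (u : nat -> R) (l c : R) : is_lim_seq u l -> (forall n, u n <= c) -> l <= c.
Proof.
  intros Hl Hc. assert (H := is_lim_seq_le u (fun _ => c) l c Hc Hl (is_lim_seq_const c)).
  exact H.
Qed.

Lemma lim_ge_const (u : nat -> R) (l c : R) : is_lim_seq u l -> (forall n, c <= u n) -> c <= l.
Proof.
  intros Hl Hc. assert (H := is_lim_seq_le (fun _ => c) u c l Hc (is_lim_seq_const c) Hl).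
  exact H.
Qed.

Lemma lim_le (u v : nat -> R) (a b : R) : is_lim_seq u a -> is_lim_seq v b -> (forall n, u n <= v n) -> a <= b.
Proof.
  intros Ha Hb H. exact (is_lim_seq_le u v a b H Ha Hb).
Qed.

Lemma Rmax_mono_r a x y : x <= y -> Rmax a x <= Rmax a y.
Proof. intros. unfold Rmax; repeat destruct Rle_dec; lra. Qed.

Lemma Rmax_mono a b x y : a <= b -> x <= y -> Rmax a x <= Rmax b y.
Proof. intros. unfold Rmax; repeat destruct Rle_dec; lra. Qed.

Lemma Rmax_lip a x y : Rabs (Rmax a x - Rmax a y) <= Rabs (x - y).
Proof. unfold Rmax; repeat destruct Rle_dec; unfold Rabs; repeat destruct Rcase_abs; lra. Qed.

Lemma lim_Rmax (u : nat -> R) (a l : R) : is_lim_seq u l -> is_lim_seq (fun n => Rmax a (u n)) (Rmax a l).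
Proof.
  intros H. apply is_lim_seq_Reals in H. apply is_lim_seq_Reals.
  intros eps Heps. destruct (H eps Heps) as [N HN]. exists N. intros n Hn.
  specialize (HN n Hn). unfold Rdist in *. eapply Rle_lt_trans; [apply Rmax_lip|]. exact HN.
Qed.

Lemma ev_list {I} (J : list I) (P : nat -> I -> Prop) :
  (forall j, In j J -> exists N, forall n, (n >= N)%nat -> P n j) ->
  exists N, forall n, (n >= N)%nat -> forall j, In j J -> P n j.
Proof.
  induction J as [|a J IH]; intros H.
  - exists 0%nat. intros n _ j [].
  - destruct (H a (or_introl eq_refl)) as [N1 H1].
    destruct IH as [N2 H2]. { intros j Hj. apply H. right; exact Hj. }
    exists (Nat.max N1 N2). intros n Hn j [<-|Hj].
    + apply H1. lia.
    + apply H2; [lia| exact Hj].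
Qed.

Lemma vanish_bounded {I} (J : list I) (f : I -> R) :
  (forall j, ~ In j J -> f j = 0) -> Defs.bounded f.
Proof.
  intros H. exists (fold_right (fun j acc => Rabs (f j) + acc) 0 J).
  assert (Hp : 0 <= fold_right (fun j acc => Rabs (f j) + acc) 0 J /\
     forall i, In i J -> Rabs (f i) <= fold_right (fun j acc => Rabs (f j) + acc) 0 J).
  { clear H. induction J as [|a J IH]; simpl.
    - split; [lra| intros i []].
    - destruct IH as [IH1 IH2]. split.
      + pose proof (Rabs_pos (f a)). lra.
      + intros i [<-|Hi]. * lra. * specialize (IH2 i Hi). pose proof (Rabs_pos (f a)). lra. }
  destruct Hp as [Hp1 Hp2]. intros i.
  destruct (classic (In i J)) as [Hi|Hi].
  - apply Hp2; exact Hi.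
  - rewrite (H i Hi), Rabs_R0. exact Hp1.
Qed.
Definition nonneg {I} (s : I -> R) := forall i, 0 <= s i.

Lemma Kinf_mono g : Kinf g -> forall x y, 0 <= x -> x <= y -> g x <= g y.
Proof.
  intros [_ [_ [_ [Hs _]]]] x y Hx Hxy.
  destruct (Req_dec x y) as [->|Hne]; [lra|]. left. apply Hs; lra.
Qed.


Lemma vec_props {I} Idec (Ii : I -> list I) gam mu (Hg : gain_operator Idec Ii gam mu)
  (s : I -> R) i : nonneg s ->
  lpos (restr Idec (Ii i) (fun j => gam i j (s j))) /\
  vanish_off (Ii i) (restr Idec (Ii i) (fun j => gam i j (s j))).
Proof.
  destruct Hg as [Hirr [HK _]]. intros Hs.
  assert (Hv : vanish_off (Ii i) (restr Idec (Ii i) (fun j => gam i j (s j)))).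
  { intros j Hj. unfold restr. destruct (in_dec Idec j (Ii i)); [contradiction|reflexivity]. }
  split; [|exact Hv]. split.
  - intros j. unfold restr. destruct (in_dec Idec j (Ii i)) as [Hj|Hj]; [|lra].
    destruct (HK i j Hj) as [_ [H _]]. apply H, Hs.
  - apply (vanish_bounded (Ii i)). exact Hv.
Qed.

Lemma G_eq {I} Idec (Ii : I -> list I) gam mu (Hg : gain_operator Idec Ii gam mu)
  (s : I -> R) i : nonneg s ->
  mu i (restr Idec (Ii i) (fun j => gam i j (s j))) = Finite (Gamma Idec Ii gam mu s i).
Proof.
  intros Hs. destruct (vec_props Idec Ii gam mu Hg s i Hs) as [Hl Hv].
  destruct Hg as [_ [_ [_ [_ [_ [HM3 _]]]]]].
  destruct (HM3 i (Ii i)) as [Hf _]. unfold Gamma. symmetry. exact (Hf _ Hl Hv).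
Qed.

Lemma G_nonneg {I} (ne : inhabited I) Idec (Ii : I -> list I) gam mu (Hg : gain_operator Idec Ii gam mu)
  (s : I -> R) i : nonneg s -> 0 <= Gamma Idec Ii gam mu s i.
Proof.
  intros Hs. pose proof (G_eq Idec Ii gam mu Hg s i Hs) as He.
  destruct (vec_props Idec Ii gam mu Hg s i Hs) as [Hl Hv].
  destruct Hg as [_ [_ [_ [HM1 _]]]].
  destruct (HM1 i) as [xi [Hxi [_ H]]].
  specialize (H _ Hl). rewrite He in H. simpl in H.
  eapply Rle_trans; [|exact H].
  destruct Hxi as [_ [Hxi _]]. apply Hxi. apply norm_nonneg; [exact ne| apply Hl].
Qed.

Lemma G_mono {I} Idec (Ii : I -> list I) gam mu (Hg : gain_operator Idec Ii gam mu)
  (s t : I -> R) i : nonneg s -> fle s t ->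
  Gamma Idec Ii gam mu s i <= Gamma Idec Ii gam mu t i.
Proof.
  intros Hs Hst.
  assert (Ht : nonneg t). { intros j. eapply Rle_trans; [apply Hs| apply Hst]. }
  pose proof (G_eq Idec Ii gam mu Hg s i Hs) as Hes.
  pose proof (G_eq Idec Ii gam mu Hg t i Ht) as Het.
  destruct (vec_props Idec Ii gam mu Hg s i Hs) as [Hls _].
  destruct (vec_props Idec Ii gam mu Hg t i Ht) as [Hlt _].
  destruct Hg as [Hirr [HK [_ [_ [HM2 _]]]]].
  assert (H := HM2 i _ _ Hls Hlt).
  rewrite Hes, Het in H. apply H.
  intros j. unfold restr. destruct (in_dec Idec j (Ii i)) as [Hj|Hj]; [|lra].
  apply (Kinf_mono _ (HK i j Hj)); [apply Hs| apply Hst].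
Qed.

Lemma G_cont {I} (ne : inhabited I) Idec (Ii : I -> list I) gam mu (Hg : gain_operator Idec Ii gam mu)
  (t : nat -> I -> R) (t0 : I -> R) : (forall n, nonneg (t n)) -> nonneg t0 ->
  (forall j, is_lim_seq (fun n => t n j) (t0 j)) ->
  forall i, is_lim_seq (fun n => Gamma Idec Ii gam mu (t n) i) (Gamma Idec Ii gam mu t0 i).
Proof.
  intros Ht Ht0 Hlim i.
  apply is_lim_seq_Reals. intros eps Heps.
  destruct (vec_props Idec Ii gam mu Hg t0 i Ht0) as [Hl0 Hv0].
  pose proof Hg as Hg'.
  destruct Hg' as [Hirr [HK [_ [_ [_ [HM3 _]]]]]].
  destruct (HM3 i (Ii i)) as [_ Hc].
  destruct (Hc _ Hl0 Hv0 eps Heps) as [d [Hd Hcd]].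
  destruct (ev_list (Ii i) (fun n j => Rabs (gam i j (t n j) - gam i j (t0 j)) < d / 2)) as [N HN].
  { intros j Hj. destruct (HK i j Hj) as [_ [_ [Hcont _]]].
    destruct (Hcont (t0 j) (Ht0 j) (d/2) ltac:(lra)) as [d' [Hd' Hcd']].
    specialize (Hlim j). apply is_lim_seq_Reals in Hlim.
    destruct (Hlim d' Hd') as [N HN]. exists N. intros n Hn.
    apply Hcd'; [apply Ht| apply HN; exact Hn]. }
  exists N. intros n Hn. unfold Rdist.
  destruct (vec_props Idec Ii gam mu Hg (t n) i (Ht n)) as [Hln Hvn].
  specialize (Hcd _ Hln Hvn).
  unfold Gamma.
  apply Hcd.
  eapply Rle_lt_trans; [apply (norm_le ne _ (d/2))|lra].
  intros j. unfold restr. destruct (in_dec Idec j (Ii i)) as [Hj|Hj].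
  - left. apply HN; assumption.
  - rewrite Rminus_0_r, Rabs_R0. lra.
Qed.
Section Main.
#[local] Set Default Proof Using "All".
Context {I : Type} (ne : inhabited I) (Idec : forall x y : I, {x = y} + {x <> y})
  (Ii : I -> list I) (gam : I -> I -> R -> R) (mu : I -> (I -> R) -> Rbar)
  (Hg : gain_operator Idec Ii gam mu) (phi : R -> R) (Hphi : Kinf phi)
  (Hm : forall s b, lpos s -> lpos b -> fle s (oplus b (Gamma Idec Ii gam mu s)) ->
      linf_norm s <= phi (linf_norm b)).

Local Notation G := (Gamma Idec Ii gam mu).
Definition GbD (b s : I -> R) : I -> R := oplus b (G s).

Lemma phi_nonneg (b : I -> R) : lpos b -> 0 <= phi (linf_norm b).
Proof.
  intros Hb. destruct Hphi as [_ [H _]]. apply H. apply norm_nonneg; [exact ne| apply Hb].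
Qed.

Lemma lpos_of (s : I -> R) B : nonneg s -> (forall i, s i <= B) -> lpos s.
Proof.
  intros H1 H2. split; [exact H1|]. exists B. intros i. rewrite Rabs_pos_eq; [apply H2| apply H1].
Qed.

Lemma mbi_pt (s b : I -> R) : lpos s -> lpos b -> fle s (oplus b (G s)) -> forall i, s i <= phi (linf_norm b).
Proof.
  intros Hs Hb H i. pose proof (Hm s b Hs Hb H).
  eapply Rle_trans; [apply Rle_abs|]. eapply Rle_trans; [apply (norm_ge s (proj2 Hs))|]. exact H0.
Qed.

Lemma trunc (b x y : I -> R) : lpos b -> nonneg x -> (forall i, x i <= phi (linf_norm b)) ->
  fle x y -> fle y (oplus b (G x)) -> forall i, y i <= phi (linf_norm b).
Proof.
  intros Hb Hx HxR Hxy Hy.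
  set (R0 := phi (linf_norm b)) in *.
  assert (HR0 : 0 <= R0) by (apply phi_nonneg; exact Hb).
  set (t := fun i => Rmin (y i) (R0 + 1)).
  assert (Hxt : fle x t).
  { intros i. unfold t. apply Rmin_glb; [apply Hxy| specialize (HxR i); lra]. }
  assert (Htn : nonneg t). { intros i. eapply Rle_trans; [apply Hx| apply Hxt]. }
  assert (Htl : lpos t). { apply (lpos_of t (R0 + 1)); [exact Htn| intros i; apply Rmin_r]. }
  assert (Ht : fle t (oplus b (G t))).
  { intros i. eapply Rle_trans; [apply Rmin_l|]. eapply Rle_trans; [apply Hy|].
    unfold oplus. apply Rmax_mono_r. apply G_mono; [exact Hg| exact Hx| exact Hxt]. }
  intros i. pose proof (mbi_pt t b Htl Hb Ht i) as H. unfold t in H. fold R0 in H.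
  unfold Rmin in H. destruct (Rle_dec (y i) (R0 + 1)); lra.
Qed.

Lemma Gb_nonneg (b s : I -> R) : nonneg b -> nonneg (GbD b s).
Proof. intros Hb i. unfold GbD, oplus. eapply Rle_trans; [apply Hb| apply Rmax_l]. Qed.

Lemma Gb_mono (b1 b2 s t : I -> R) : nonneg s -> fle s t -> fle b1 b2 -> fle (GbD b1 s) (GbD b2 t).
Proof.
  intros Hs Hst Hb i. unfold GbD, oplus. apply Rmax_mono; [apply Hb|].
  apply G_mono; assumption.
Qed.

Lemma iter_mono (b1 b2 s t : I -> R) : nonneg b1 -> fle b1 b2 -> nonneg s -> fle s t ->
  forall n, nonneg (Nat.iter n (GbD b1) s) /\ fle (Nat.iter n (GbD b1) s) (Nat.iter n (GbD b2) t).
Proof.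
  intros Hb1 Hb Hs Hst n. induction n as [|n [IH1 IH2]]; simpl.
  - split; assumption.
  - split. + apply Gb_nonneg; exact Hb1. + apply Gb_mono; assumption.
Qed.

Lemma Gb_cont (b : I -> R) (t : nat -> I -> R) (t0 : I -> R) : (forall n, nonneg (t n)) -> nonneg t0 ->
  (forall j, is_lim_seq (fun n => t n j) (t0 j)) ->
  forall i, is_lim_seq (fun n => GbD b (t n) i) (GbD b t0 i).
Proof.
  intros H1 H2 H3 i. unfold GbD, oplus. apply lim_Rmax. apply G_cont; assumption.
Qed.

Definition slowF (b : I -> R) (i : I) := real (Lim_seq (fun n => Nat.iter n (GbD b) (fun _ => 0) i)).
Definition shighF (b : I -> R) (i : I) := real (Lub_Rbar (fun x => exists s, lpos s /\ fle s (GbD b s) /\ x = s i)).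

Lemma zero_nonneg : nonneg (fun _ : I => 0).
Proof. intros i; lra. Qed.

Lemma low_props (b : I -> R) : lpos b -> forall n,
  nonneg (Nat.iter n (GbD b) (fun _ => 0)) /\
  fle (Nat.iter n (GbD b) (fun _ => 0)) (Nat.iter (S n) (GbD b) (fun _ => 0)) /\
  (forall i, Nat.iter n (GbD b) (fun _ => 0) i <= phi (linf_norm b)).
Proof.
  intros Hb n. induction n as [|n [IH1 [IH2 IH3]]].
  - simpl. split; [exact zero_nonneg|]. split.
    + intros i. exact (Gb_nonneg _ _ (proj1 Hb) i).
    + intros i. apply phi_nonneg, Hb.
  - split; [simpl; exact (Gb_nonneg _ _ (proj1 Hb))|]. split.
    + change (fle (GbD b (Nat.iter n (GbD b) (fun _ => 0))) (GbD b (Nat.iter (S n) (GbD b) (fun _ => 0)))).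
      apply Gb_mono; [exact IH1| exact IH2| intros i; lra].
    + apply (trunc b (Nat.iter n (GbD b) (fun _ => 0))); [exact Hb| exact IH1| exact IH3| exact IH2|].
      intros i. simpl. unfold GbD. lra.
Qed.

Lemma slow_lim (b : I -> R) : lpos b -> forall i,
  is_lim_seq (fun n => Nat.iter n (GbD b) (fun _ => 0) i) (slowF b i).
Proof.
  intros Hb i. unfold slowF. apply (incr_cv _ (phi (linf_norm b))).
  - intros n. apply (low_props b Hb n).
  - intros n. apply (low_props b Hb n).
Qed.

Lemma slow_bounds (b : I -> R) : lpos b -> forall i, 0 <= slowF b i <= phi (linf_norm b).
Proof.
  intros Hb i. split.
  - apply (lim_ge_const _ _ _ (slow_lim b Hb i)). intros n. apply (low_props b Hb n).
  - apply (lim_le_const _ _ _ (slow_lim b Hb i)). intros n. apply (low_props b Hb n).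
Qed.

Lemma slow_lpos (b : I -> R) : lpos b -> lpos (slowF b).
Proof.
  intros Hb. apply (lpos_of _ (phi (linf_norm b))); intros i; apply (slow_bounds b Hb i).
Qed.

Lemma slow_fix (b : I -> R) : lpos b -> forall i, GbD b (slowF b) i = slowF b i.
Proof.
  intros Hb i. apply (lim_uniq (fun n => Nat.iter (S n) (GbD b) (fun _ => 0) i)).
  - simpl. apply Gb_cont.
    + intros n; apply (low_props b Hb n).
    + exact (proj1 (slow_lpos b Hb)).
    + apply slow_lim, Hb.
  - apply (is_lim_seq_incr_1 (fun n => Nat.iter n (GbD b) (fun _ => 0) i)). apply slow_lim, Hb.
Qed.

Lemma slow_least (b s : I -> R) : lpos b -> nonneg s -> fle (GbD b s) s -> fle (slowF b) s.
Proof.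
  intros Hb Hs Hfix.
  assert (H : forall n, fle (Nat.iter n (GbD b) (fun _ => 0)) s).
  { induction n as [|n IH]; simpl. - exact Hs.
    - intros i. eapply Rle_trans; [|apply Hfix]. apply Gb_mono; [apply (low_props b Hb n)| exact IH| intros j; lra]. }
  intros i. apply (lim_le_const _ _ _ (slow_lim b Hb i)). intros n; apply H.
Qed.


Lemma zero_lpos : lpos (fun _ : I => 0).
Proof. apply (lpos_of _ 0); [exact zero_nonneg| intros; lra]. Qed.

Lemma high_props (b : I -> R) : lpos b ->
  (forall s, lpos s -> fle s (GbD b s) -> fle s (shighF b)) /\
  (forall i, 0 <= shighF b i <= phi (linf_norm b)).
Proof.
  intros Hb.
  assert (H : forall i, (forall x, (exists s, lpos s /\ fle s (GbD b s) /\ x = s i) -> x <= shighF b i) /\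
     (forall c, (forall x, (exists s, lpos s /\ fle s (GbD b s) /\ x = s i) -> x <= c) -> shighF b i <= c)).
  { intros i. unfold shighF. apply (lub_props _ 0 (phi (linf_norm b))).
    - exists (fun _ => 0). split; [exact zero_lpos|]. split; [|reflexivity].
      intros j. exact (Gb_nonneg _ _ (proj1 Hb) j).
    - intros x [s [Hs [Hsf ->]]]. apply (mbi_pt s b Hs Hb Hsf). }
  split.
  - intros s Hs Hsf i. apply (proj1 (H i)). exists s; auto.
  - intros i. split.
    + apply (proj1 (H i)). exists (fun _ => 0). split; [exact zero_lpos|]. split; [|reflexivity].
      intros j. exact (Gb_nonneg _ _ (proj1 Hb) j).
    + apply (proj2 (H i)). intros x [s [Hs [Hsf ->]]]. apply (mbi_pt s b Hs Hb Hsf).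
Qed.

Lemma high_lpos (b : I -> R) : lpos b -> lpos (shighF b).
Proof.
  intros Hb. apply (lpos_of _ (phi (linf_norm b))); intros i; apply (high_props b Hb).
Qed.

Lemma high_fix (b : I -> R) : lpos b -> forall i, GbD b (shighF b) i = shighF b i.
Proof.
  intros Hb.
  assert (H1 : fle (shighF b) (GbD b (shighF b))).
  { intros i. unfold shighF at 1.
    apply (lub_props _ 0 (phi (linf_norm b))).
    - exists (fun _ => 0). split; [exact zero_lpos|]. split; [|reflexivity].
      intros j. exact (Gb_nonneg _ _ (proj1 Hb) j).
    - intros x [s [Hs [Hsf ->]]]. apply (mbi_pt s b Hs Hb Hsf).
    - intros x [s [Hs [Hsf ->]]]. eapply Rle_trans; [apply Hsf|].
      apply Gb_mono; [exact (proj1 Hs)| apply (proj1 (high_props b Hb)); assumption| intros j; lra]. }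
  assert (H2 : fle (GbD b (shighF b)) (shighF b)).
  { apply (proj1 (high_props b Hb)).
    - apply (lpos_of _ (phi (linf_norm b))).
      + exact (Gb_nonneg _ _ (proj1 Hb)).
      + apply (trunc b (shighF b)); [exact Hb| exact (proj1 (high_lpos b Hb))| apply (high_props b Hb)| exact H1|].
        intros i; unfold GbD; lra.
    - apply Gb_mono; [exact (proj1 (high_lpos b Hb))| exact H1| intros j; lra]. }
  intros i. apply Rle_antisym; [apply H2| apply H1].
Qed.

Lemma iter_fix (b f : I -> R) : (forall i, GbD b f i = f i) -> forall n, Nat.iter n (GbD b) f = f.
Proof.
  intros H n. induction n as [|n IH]; simpl; [reflexivity|]. rewrite IH.
  apply functional_extensionality. exact H.
Qed.

Lemma part_c (b s : I -> R) : lpos b -> lpos s -> fle s (slowF b) ->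
  wstar_cv (fun n => Nat.iter n (GbD b) s) (slowF b).
Proof.
  intros Hb Hs Hss.
  assert (Hfix := iter_fix b (slowF b) (slow_fix b Hb)).
  assert (Hlo : forall n, fle (Nat.iter n (GbD b) (fun _ => 0)) (Nat.iter n (GbD b) s)).
  { intros n. apply (iter_mono b b); [exact (proj1 Hb)| intros j; lra| exact zero_nonneg| intros j; apply (proj1 Hs)]. }
  assert (Hhi : forall n, fle (Nat.iter n (GbD b) s) (slowF b)).
  { intros n. rewrite <- (Hfix n). apply (iter_mono b b); [exact (proj1 Hb)| intros j; lra| exact (proj1 Hs)| exact Hss]. }
  assert (Hnn : forall n, nonneg (Nat.iter n (GbD b) s)).
  { intros n. apply (iter_mono b b s s); [exact (proj1 Hb)| intros j; lra| exact (proj1 Hs)| intros j; lra]. }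
  split.
  - exists (phi (linf_norm b)). intros n i. rewrite Rabs_pos_eq; [|apply Hnn].
    eapply Rle_trans; [apply Hhi| apply (slow_bounds b Hb)].
  - intros i. apply (is_lim_seq_le_le (fun n => Nat.iter n (GbD b) (fun _ => 0) i) _ (fun _ => slowF b i)).
    + intros n; split; [apply Hlo| apply Hhi].
    + apply slow_lim, Hb.
    + apply is_lim_seq_const.
Qed.

Fixpoint runmax (u : nat -> I -> R) (n : nat) : I -> R :=
  match n with
  | O => u O
  | S m => fun i => Rmax (runmax u m i) (u (S m) i)
  end.

Lemma part_d (b s : I -> R) : lpos b -> lpos s -> fle (shighF b) s ->
  wstar_cv (fun n => Nat.iter n (GbD b) s) (shighF b).
Proof.
  intros Hb Hs Hss.
  set (u := fun n => Nat.iter n (GbD b) s).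
  set (b' := oplus b s).
  assert (Hb' : lpos b').
  { destruct Hb as [Hb1 [Mb HMb]]. destruct Hs as [Hs1 [Ms HMs]].
    apply (lpos_of _ (Rmax Mb Ms)).
    - intros i. unfold b', oplus. eapply Rle_trans; [apply Hb1| apply Rmax_l].
    - intros i. unfold b', oplus. apply Rmax_mono.
      + eapply Rle_trans; [apply Rle_abs| apply HMb].
      + eapply Rle_trans; [apply Rle_abs| apply HMs]. }
  set (R1 := phi (linf_norm b')).
  assert (Hnn : forall n, nonneg (u n)).
  { intros n. apply (iter_mono b b s s); [exact (proj1 Hb)| intros j; lra| exact (proj1 Hs)| intros j; lra]. }
  assert (Hinv : forall n, nonneg (runmax u n) /\ fle (u n) (runmax u n) /\
      fle (runmax u n) (oplus b' (Gamma Idec Ii gam mu (runmax u n))) /\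
      (forall i, runmax u n i <= R1)).
  { induction n as [|n [IH1 [IH2 [IH3 IH4]]]].
    - simpl. assert (H0 : fle s (oplus b' (Gamma Idec Ii gam mu s))).
      { intros i. unfold b', oplus. eapply Rle_trans; [|apply Rmax_l]. apply Rmax_r. }
      split; [exact (proj1 Hs)|]. split; [intros i; unfold u; simpl; lra|]. split; [exact H0|].
      apply (mbi_pt s b' Hs Hb' H0).
    - assert (Y : fle (runmax u (S n)) (oplus b' (Gamma Idec Ii gam mu (runmax u n)))).
      { intros i. simpl. unfold u at 2. simpl. fold (u n).
        assert (HG := G_mono Idec Ii gam mu Hg (u n) (runmax u n) i (Hnn n) IH2).
        specialize (IH3 i). unfold GbD, b', oplus in *.
        revert HG IH3. unfold Rmax; repeat destruct Rle_dec; lra. }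
      assert (X : fle (runmax u n) (runmax u (S n))). { intros i; simpl; apply Rmax_l. }
      split; [intros i; eapply Rle_trans; [apply IH1| apply X]|].
      split; [intros i; simpl; apply Rmax_r|].
      split.
      + intros i. eapply Rle_trans; [apply Y|]. unfold oplus. apply Rmax_mono_r.
        apply G_mono; [exact Hg| exact IH1| exact X].
      + apply (trunc b' (runmax u n)); assumption. }
  assert (Hub : forall n i, u n i <= R1).
  { intros n i. eapply Rle_trans; [apply (proj1 (proj2 (Hinv n)))| apply (Hinv n)]. }
  assert (Hfix := iter_fix b (shighF b) (high_fix b Hb)).
  assert (Hlb : forall n, fle (shighF b) (u n)).
  { intros n. rewrite <- (Hfix n). apply (iter_mono b b); [exact (proj1 Hb)| intros j; lra| exact (proj1 (high_lpos b Hb))| exact Hss]. }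
  set (z := fun n i => real (Lub_Rbar (fun x => exists k, (n <= k)%nat /\ x = u k i))).
  assert (Hz : forall n i, (forall k, (n <= k)%nat -> u k i <= z n i) /\
     (forall c, (forall k, (n <= k)%nat -> u k i <= c) -> z n i <= c)).
  { intros n i. destruct (lub_props (fun x => exists k, (n <= k)%nat /\ x = u k i) (u n i) R1) as [A B].
    - exists n; split; [lia|reflexivity].
    - intros x [k [_ ->]]. apply Hub.
    - split.
      + intros k Hk. apply A. exists k; split; [exact Hk|reflexivity].
      + intros c Hc. apply B. intros x [k [Hk ->]]. apply Hc, Hk. }
  assert (Hzlb : forall n i, shighF b i <= z n i).
  { intros n i. eapply Rle_trans; [apply (Hlb n)|]. apply (proj1 (Hz n i)). lia. }
  assert (Hzub : forall n i, z n i <= R1).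
  { intros n i. apply (proj2 (Hz n i)). intros k _. apply Hub. }
  assert (Hznn : forall n, nonneg (z n)).
  { intros n i. eapply Rle_trans; [apply (high_props b Hb)| apply Hzlb]. }
  assert (Hzdec : forall n i, z (S n) i <= z n i).
  { intros n i. apply (proj2 (Hz (S n) i)). intros k Hk. apply (proj1 (Hz n i)). lia. }
  assert (Hzstep : forall n i, z (S n) i <= GbD b (z n) i).
  { intros n i. apply (proj2 (Hz (S n) i)). intros k Hk.
    destruct k as [|k]; [lia|].
    change (GbD b (u k) i <= GbD b (z n) i).
    apply Gb_mono; [apply Hnn| |intros j; lra].
    intros j. apply (proj1 (Hz n j)). lia. }
  set (w := fun i => real (Lim_seq (fun n => z n i))).
  assert (Hw : forall i, is_lim_seq (fun n => z n i) (w i)).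
  { intros i. apply (decr_cv _ 0); [intros n; apply Hzdec| intros n; apply Hznn]. }
  assert (Hwl : lpos w).
  { apply (lpos_of _ R1).
    - intros i. apply (lim_ge_const _ _ _ (Hw i)). intros n; apply Hznn.
    - intros i. apply (lim_le_const _ _ _ (Hw i)). intros n; apply Hzub. }
  assert (Hwf : fle w (GbD b w)).
  { intros i. apply (lim_le (fun n => z (S n) i) (fun n => GbD b (z n) i)).
    - apply (is_lim_seq_incr_1 (fun n => z n i)). apply Hw.
    - apply Gb_cont; [exact Hznn| exact (proj1 Hwl)| exact Hw].
    - intros n; apply Hzstep. }
  assert (Hweq : forall i, w i = shighF b i).
  { intros i. apply Rle_antisym.
    - apply (proj1 (high_props b Hb)); assumption.
    - apply (lim_ge_const _ _ _ (Hw i)). intros n; apply Hzlb. }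
  split.
  - exists R1. intros n i. rewrite Rabs_pos_eq; [apply Hub| apply Hnn].
  - intros i. apply (is_lim_seq_le_le (fun _ => shighF b i) _ (fun n => z n i)).
    + intros n; split; [apply Hlb| apply (proj1 (Hz n i)); lia].
    + apply is_lim_seq_const.
    + rewrite <- Hweq. apply Hw.
Qed.

Lemma part_b (b1 b2 : I -> R) : lpos b1 -> lpos b2 -> fle b1 b2 ->
  fle (slowF b1) (slowF b2) /\ fle (shighF b1) (shighF b2).
Proof.
  intros H1 H2 H12. split.
  - intros i. apply (lim_le _ _ _ _ (slow_lim b1 H1 i) (slow_lim b2 H2 i)).
    intros n. apply (iter_mono b1 b2); [exact (proj1 H1)| exact H12| exact zero_nonneg| intros j; lra].
  - apply (proj1 (high_props b2 H2)); [exact (high_lpos b1 H1)|].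
    intros i. rewrite <- (high_fix b1 H1 i) at 1.
    apply Gb_mono; [exact (proj1 (high_lpos b1 H1))| intros j; lra| exact H12].
Qed.

End Main.

Theorem proposition3p6
  (I : Type) (Idec : forall x y : I, {x = y} + {x <> y})
  (I_ne : inhabited I)
  (I_count : exists enc : I -> nat, forall x y, enc x = enc y -> x = y)
  (Ii : I -> list I) (gam : I -> I -> R -> R) (mu : I -> (I -> R) -> Rbar)
  (Hgain : gain_operator Idec Ii gam mu)
  (HMBI : oplus_MBI (Gamma Idec Ii gam mu)) :
  let Gb := fun b s => oplus b (Gamma Idec Ii gam mu s) in
  exists slow shigh : (I -> R) -> (I -> R),
    (forall b, lpos b ->
       lpos (slow b) /\ (forall i, Gb b (slow b) i = slow b i) /\
       lpos (shigh b) /\ (forall i, Gb b (shigh b) i = shigh b i) /\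
       (* (a) *)
       (forall s, lpos s -> (forall i, Gb b s i = s i) -> fle (slow b) s /\ fle s (shigh b)) /\
       (* (c) *)
       (forall s, lpos s -> fle s (slow b) ->
          wstar_cv (fun n => Nat.iter n (Gb b) s) (slow b)) /\
       (* (d) *)
       (forall s, lpos s -> fle (shigh b) s ->
          wstar_cv (fun n => Nat.iter n (Gb b) s) (shigh b))) /\
    (* (b) *)
    (forall b1 b2, lpos b1 -> lpos b2 -> fle b1 b2 ->
       fle (slow b1) (slow b2) /\ fle (shigh b1) (shigh b2)).
Proof.
  destruct HMBI as [phi [Hphi Hm]].
  intros Gb.
  exists (slowF Idec Ii gam mu), (shighF Idec Ii gam mu).
  split.
  - intros b Hb.
    split; [exact (slow_lpos I_ne Idec Ii gam mu Hgain phi Hphi Hm b Hb)|].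
    split; [exact (slow_fix I_ne Idec Ii gam mu Hgain phi Hphi Hm b Hb)|].
    split; [exact (high_lpos I_ne Idec Ii gam mu Hgain phi Hphi Hm b Hb)|].
    split; [exact (high_fix I_ne Idec Ii gam mu Hgain phi Hphi Hm b Hb)|].
    split.
    + intros s Hs Hfix. split.
      * apply (slow_least I_ne Idec Ii gam mu Hgain phi Hphi Hm b s Hb (proj1 Hs)).
        intros i. pose proof (Hfix i) as E. unfold Gb in E. unfold GbD. rewrite E. apply Rle_refl.
      * apply (proj1 (high_props I_ne Idec Ii gam mu Hgain phi Hphi Hm b Hb)); [exact Hs|].
        intros i. pose proof (Hfix i) as E. unfold Gb in E. unfold GbD. rewrite E. apply Rle_refl.
    + split.
      * intros s Hs Hss. exact (part_c I_ne Idec Ii gam mu Hgain phi Hphi Hm b s Hb Hs Hss).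
      * intros s Hs Hss. exact (part_d I_ne Idec Ii gam mu Hgain phi Hphi Hm b s Hb Hs Hss).
  - intros b1 b2 H1 H2 H12. exact (part_b I_ne Idec Ii gam mu Hgain phi Hphi Hm b1 b2 H1 H2 H12).
Qed.
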